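(* Let $\Phi:[a,b]\to\mathbb{R}$ be continuous and nowhere zero, let $x_0\in(a,b)$, and let $\mathcal S_n=\{\mathcal Y_0(x_0,x),\dots,\mathcal Y_n(x_0,x)\}$ and $\widetilde{\mathcal S}_n=\{\widetilde{\mathcal Y}_0(x_0,x),\dots,\widetilde{\mathcal Y}_n(x_0,x)\}$ (as functions of $x$) be of class $C^n(a,b)$. Then each of the sets $\mathcal S_n$ and $\widetilde{\mathcal S}_n$ is linearly independent (as functions on $(a,b)$).
   Context: For $x_0,x\in[a,b]$ the $\Phi$-power functions are defined recursively by $X^{(0)}(x_0,x)\equiv 1$, $\widetilde X^{(0)}(x_0,x)\equiv 1$ and, for $n\ge 1$, $$X^{(n)}(x_0,x)=n\int_{x_0}^x X^{(n-1)}(x_0,\xi)\,\big(\Phi(\xi)\big)^{(-1)^n}\,d\xi,\qquad \widetilde X^{(n)}(x_0,x)=n\int_{x_0}^x \widetilde X^{(n-1)}(x_0,\xi)\,\Big(\frac{1}{\Phi(\xi)}\Big)^{(-1)^n}\,d\xi.$$ For $n\ge0$, $\mathcal Y_n=\widetilde X^{(n)}$ if $n$ is odd and $\mathcal Y_n=X^{(n)}$ if $n$ is even; $\widetilde{\mathcal Y}_n=X^{(n)}$ if $n$ is odd and $\widetilde{\mathcal Y}_n=\widetilde X^{(n)}$ if $n$ is even. In this part of the paper $\Phi$ is assumed real-valued. *)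

(* Defs.v *)
From Stdlib Require Import Reals.
From Coquelicot Require Import Coquelicot.
Open Scope R_scope.

(* Generic Phi-power recursion with weight F:
   P_0 = 1,  P_n(x) = n * \int_{x0}^x P_{n-1}(xi) * F(xi)^{(-1)^n} dxi,
   where F^{(-1)^n} is F if n is even and 1/F if n is odd. *)
Fixpoint PhiPowGen (F : R -> R) (x0 : R) (n : nat) (x : R) : R :=
  match n with
  | O => 1
  | S m => INR (S m) *
      RInt (fun xi => PhiPowGen F x0 m xi *
                      (if Nat.even (S m) then F xi else / F xi)) x0 x
  end.

Definition Xpow (Phi : R -> R) (x0 : R) (n : nat) (x : R) : R :=
  PhiPowGen Phi x0 n x.

Definition Xtpow (Phi : R -> R) (x0 : R) (n : nat) (x : R) : R :=
  PhiPowGen (fun t => / Phi t) x0 n x.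

Definition Ypow (Phi : R -> R) (x0 : R) (n : nat) (x : R) : R :=
  if Nat.odd n then Xtpow Phi x0 n x else Xpow Phi x0 n x.

Definition Ytpow (Phi : R -> R) (x0 : R) (n : nat) (x : R) : R :=
  if Nat.odd n then Xpow Phi x0 n x else Xtpow Phi x0 n x.

Definition Cn_on (n : nat) (a b : R) (f : R -> R) : Prop :=
  forall x, a < x < b ->
    (forall k, (k <= n)%nat -> ex_derive_n f k x) /\
    continuous (Derive_n f n) x.

Definition continuous_on_closed (a b : R) (Phi : R -> R) : Prop :=
  forall x, a <= x <= b ->
    filterlim Phi (within (fun y => a <= y <= b) (locally x)) (locally (Phi x)).

Definition lin_indep_on (a b : R) (n : nat) (f : nat -> R -> R) : Prop :=
  forall c : nat -> R,
    (forall x, a < x < b -> sum_f_R0 (fun k => c k * f k x) n = 0) ->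
    forall k, (k <= n)%nat -> c k = 0.

(* Main.v *)
Require Import Defs.
From Stdlib Require Import Reals Lra Lia.
From Coquelicot Require Import Coquelicot.
Open Scope R_scope.

Lemma loc_int (a b x : R) : a < x < b -> locally x (fun y => a < y < b).
Proof.
  intros H.
  assert (He : 0 < Rmin (x - a) (b - x)) by (apply Rmin_pos; lra).
  exists (mkposreal _ He). intros y Hy.
  change (Rabs (y - x) < Rmin (x - a) (b - x)) in Hy.
  pose proof (Rmin_l (x - a) (b - x)). pose proof (Rmin_r (x - a) (b - x)).
  apply Rabs_def2 in Hy. lra.
Qed.

Section Gen.
Variables (a b x0 : R) (F : R -> R).
Hypothesis Hx0 : a < x0 < b.
Hypothesis HFc : forall x, a < x < b -> continuous F x.
Hypothesis HFn : forall x, a < x < b -> F x <> 0.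

Definition wt (k : nat) (xi : R) := if Nat.even k then F xi else / F xi.

Lemma wt_cont k x : a < x < b -> continuous (wt k) x.
Proof.
  intros H. unfold wt. destruct (Nat.even k).
  - now apply HFc.
  - apply continuous_Rinv_comp; auto.
Qed.

Lemma gen_cont_deriv : forall m,
  (forall x, a < x < b -> continuous (PhiPowGen F x0 m) x) /\
  (forall x, a < x < b -> is_derive (PhiPowGen F x0 (S m)) x
        (INR (S m) * (PhiPowGen F x0 m x * wt (S m) x))).
Proof.
  assert (D : forall m, (forall x, a < x < b -> continuous (PhiPowGen F x0 m) x) ->
    (forall x, a < x < b -> is_derive (PhiPowGen F x0 (S m)) x
        (INR (S m) * (PhiPowGen F x0 m x * wt (S m) x)))).
  { intros m Hc x Hx.
    set (h := fun xi => PhiPowGen F x0 m xi * wt (S m) xi).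
    assert (Hh : forall y, a < y < b -> continuous h y).
    { intros y Hy. unfold h. apply (continuous_mult (PhiPowGen F x0 m) (wt (S m))).
      now apply Hc. now apply wt_cont. }
    change (is_derive (fun x => INR (S m) * RInt h x0 x) x (INR (S m) * h x)).
    apply is_derive_scal.
    apply (is_derive_RInt h (fun y => RInt h x0 y) x0 x).
    - generalize (loc_int a b x Hx). apply filter_imp. intros y Hy.
      apply (RInt_correct (V:=R_CompleteNormedModule)). apply ex_RInt_continuous. intros z Hz.
      apply Hh. pose proof (Rmin_l x0 y). pose proof (Rmin_r x0 y).
      pose proof (Rmax_l x0 y). pose proof (Rmax_r x0 y).
      destruct (Rle_dec x0 y).
      + rewrite Rmin_left in Hz by lra. rewrite Rmax_right in Hz by lra. lra.
      + rewrite Rmin_right in Hz by lra. rewrite Rmax_left in Hz by lra. lra.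
    - now apply Hh. }
  induction m.
  - split.
    + intros x _. simpl. apply continuous_const.
    + apply D. intros x _. simpl. apply continuous_const.
  - destruct IHm as [_ IH2]. split.
    + intros x Hx. apply (ex_derive_continuous (K:=R_AbsRing) (V:=R_NormedModule)). eexists. now apply IH2.
    + apply D. intros x Hx. apply (ex_derive_continuous (K:=R_AbsRing) (V:=R_NormedModule)). eexists. now apply IH2.
Qed.

End Gen.

Lemma sum_derive (F : nat -> R -> R) (F' : nat -> R) x n :
  (forall k, is_derive (F k) x (F' k)) ->
  is_derive (fun y => sum_f_R0 (fun k => F k y) n) x (sum_f_R0 F' n).
Proof.
  intros H. induction n; simpl.
  - apply H.
  - apply (is_derive_plus _ (F (S n))); auto.
Qed.

Lemma abstract_indep (a b x0 : R) (Hx0 : a < x0 < b) : forall n f g u v,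
  (forall x, a < x < b -> u x <> 0) ->
  (forall x, a < x < b -> v x <> 0) ->
  (forall x, f 0%nat x = 1) -> (forall x, g 0%nat x = 1) ->
  (forall m, f (S m) x0 = 0) -> (forall m, g (S m) x0 = 0) ->
  (forall m x, a < x < b -> is_derive (f (S m)) x (INR (S m) * u x * g m x)) ->
  (forall m x, a < x < b -> is_derive (g (S m)) x (INR (S m) * v x * f m x)) ->
  lin_indep_on a b n f.
Proof.
  induction n; intros f g u v Hu Hv Hf0 Hg0 Hfx Hgx Hfd Hgd c Hs k Hk.
  - assert (k = 0%nat) by lia. subst. specialize (Hs x0 Hx0). simpl in Hs.
    rewrite Hf0 in Hs. lra.
  - assert (Hc0 : c 0%nat = 0).
    { specialize (Hs x0 Hx0). rewrite decomp_sum in Hs by lia. simpl in Hs.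
      rewrite Hf0 in Hs.
      rewrite sum_eq_R0 in Hs. lra. intros j _. rewrite Hfx. ring. }
    set (c' := fun j => c (S j) * INR (S j)).
    assert (Hs' : forall x, a < x < b -> sum_f_R0 (fun j => c' j * g j x) n = 0).
    { intros x Hx.
      assert (HD : is_derive (fun y => sum_f_R0 (fun k => c k * f k y) (S n)) x
                 (sum_f_R0 (fun k => match k with O => 0 | S j => c (S j) * (INR (S j) * u x * g j x) end) (S n))).
      { apply (sum_derive (fun k y => c k * f k y)). intros [|j].
        - apply is_derive_ext with (f := fun _ => c 0%nat * 1).
          intros t. now rewrite Hf0.
          replace 0 with (@zero R_AbsRing) by reflexivity. apply (is_derive_const (K:=R_AbsRing) (V:=R_NormedModule)).
        - apply is_derive_scal. now apply Hfd. }
      assert (HZ : is_derive (fun y => sum_f_R0 (fun k => c k * f k y) (S n)) x 0).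
      { apply is_derive_ext_loc with (f := fun _ => 0).
        generalize (loc_int a b x Hx). apply filter_imp. intros y Hy. now rewrite Hs.
        replace 0 with (@zero R_AbsRing) by reflexivity. apply (is_derive_const (K:=R_AbsRing) (V:=R_NormedModule)). }
      apply is_derive_unique in HD. apply is_derive_unique in HZ.
      rewrite HD in HZ. rewrite decomp_sum in HZ by lia. simpl pred in HZ.
      rewrite Rplus_0_l in HZ.
      assert (E : sum_f_R0 (fun i => c (S i) * (INR (S i) * u x * g i x)) n
                  = u x * sum_f_R0 (fun j => c' j * g j x) n).
      { rewrite scal_sum. apply sum_eq. intros i _. unfold c'. ring. }
      rewrite E in HZ. apply Rmult_integral in HZ. destruct HZ as [HZ|HZ]; auto.
      exfalso. now apply (Hu x Hx). }
    assert (IHc := IHn g f v u Hv Hu Hg0 Hf0 Hgx Hfx Hgd Hfd c' Hs').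
    destruct k as [|j]. exact Hc0.
    assert (Hj := IHc j ltac:(lia)). unfold c' in Hj.
    apply Rmult_integral in Hj. destruct Hj as [Hj|Hj]; auto.
    exfalso. apply (not_0_INR (S j)); auto.
Qed.

Section Main.
Variables (a b : R) (Phi : R -> R) (x0 : R).
Hypothesis Hc : continuous_on_closed a b Phi.
Hypothesis Hn : forall x, a <= x <= b -> Phi x <> 0.
Hypothesis Hx0 : a < x0 < b.

Lemma Phi_cont x : a < x < b -> continuous Phi x.
Proof.
  intros Hx. assert (H := Hc x ltac:(lra)).
  intros P HP. specialize (H P HP).
  unfold filtermap, within in H. unfold filtermap. generalize (filter_and _ _ H (loc_int a b x Hx)). apply filter_imp.
  intros y [H1 H2]. apply H1. lra.
Qed.

Lemma Phin x : a < x < b -> Phi x <> 0.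
Proof. intros; apply Hn; lra. Qed.

Lemma iPhi_cont x : a < x < b -> continuous (fun t => / Phi t) x.
Proof. intros Hx. apply continuous_Rinv_comp. now apply Phi_cont. now apply Phin. Qed.

Lemma iPhin x : a < x < b -> / Phi x <> 0.
Proof. intros Hx. apply Rinv_neq_0_compat. now apply Phin. Qed.

Definition dP m := proj2 (gen_cont_deriv a b x0 Phi Hx0 Phi_cont Phin m).
Definition diP m := proj2 (gen_cont_deriv a b x0 (fun t => / Phi t) Hx0 iPhi_cont iPhin m).

Lemma even_succ' m : Nat.even (S m) = negb (Nat.even m).
Proof. rewrite Nat.even_succ, <- Nat.negb_even. reflexivity. Qed.
Lemma odd_succ' m : Nat.odd (S m) = Nat.even m.
Proof. apply Nat.odd_succ. Qed.
Lemma odd_even m : Nat.odd m = negb (Nat.even m).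
Proof. rewrite <- Nat.negb_even. reflexivity. Qed.

Lemma Yder m x : a < x < b ->
  is_derive (Ypow Phi x0 (S m)) x (INR (S m) * Phi x * Ytpow Phi x0 m x).
Proof.
  intros Hx. unfold Ypow, Ytpow, Xpow, Xtpow.
  rewrite odd_succ', odd_even. destruct (Nat.even m) eqn:E; simpl negb; cbv iota.
  - assert (H := diP m x Hx). unfold wt in H. rewrite even_succ', E in H. simpl in H.
    rewrite Rinv_inv in H. replace (INR (S m) * Phi x * PhiPowGen (fun t => / Phi t) x0 m x)
      with (INR (S m) * (PhiPowGen (fun t => / Phi t) x0 m x * Phi x)) by ring. exact H.
  - assert (H := dP m x Hx). unfold wt in H. rewrite even_succ', E in H. simpl in H.
    replace (INR (S m) * Phi x * PhiPowGen Phi x0 m x)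
      with (INR (S m) * (PhiPowGen Phi x0 m x * Phi x)) by ring. exact H.
Qed.

Lemma Ytder m x : a < x < b ->
  is_derive (Ytpow Phi x0 (S m)) x (INR (S m) * / Phi x * Ypow Phi x0 m x).
Proof.
  intros Hx. unfold Ypow, Ytpow, Xpow, Xtpow.
  rewrite odd_succ', odd_even. destruct (Nat.even m) eqn:E; simpl negb; cbv iota.
  - assert (H := dP m x Hx). unfold wt in H. rewrite even_succ', E in H. simpl in H.
    replace (INR (S m) * / Phi x * PhiPowGen Phi x0 m x)
      with (INR (S m) * (PhiPowGen Phi x0 m x * / Phi x)) by ring. exact H.
  - assert (H := diP m x Hx). unfold wt in H. rewrite even_succ', E in H. simpl in H.
    replace (INR (S m) * / Phi x * PhiPowGen (fun t => / Phi t) x0 m x)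
      with (INR (S m) * (PhiPowGen (fun t => / Phi t) x0 m x * / Phi x)) by ring. exact H.
Qed.

Lemma PG0 G m : PhiPowGen G x0 (S m) x0 = 0.
Proof. simpl PhiPowGen. rewrite RInt_point. apply Rmult_0_r. Qed.

Lemma Y0 m : Ypow Phi x0 (S m) x0 = 0.
Proof. unfold Ypow, Xpow, Xtpow. destruct (Nat.odd (S m)); apply PG0. Qed.
Lemma Yt0 m : Ytpow Phi x0 (S m) x0 = 0.
Proof. unfold Ytpow, Xpow, Xtpow. destruct (Nat.odd (S m)); apply PG0. Qed.

End Main.

Theorem proposition2 (a b : R) (Phi : R -> R) (x0 : R) (n : nat) :
  continuous_on_closed a b Phi ->
  (forall x, a <= x <= b -> Phi x <> 0) ->
  a < x0 < b ->
  (forall k, (k <= n)%nat -> Cn_on n a b (Ypow Phi x0 k)) ->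
  (forall k, (k <= n)%nat -> Cn_on n a b (Ytpow Phi x0 k)) ->
  lin_indep_on a b n (Ypow Phi x0) /\ lin_indep_on a b n (Ytpow Phi x0).
Proof.
  intros Hc Hn Hx0 _ _. split.
  - apply (abstract_indep a b x0 Hx0 n _ (Ytpow Phi x0) Phi (fun t => / Phi t)).
    + apply Phin; auto.
    + apply iPhin; auto.
    + reflexivity.
    + reflexivity.
    + apply Y0.
    + apply Yt0.
    + apply Yder; auto.
    + apply Ytder; auto.
  - apply (abstract_indep a b x0 Hx0 n _ (Ypow Phi x0) (fun t => / Phi t) Phi).
    + apply iPhin; auto.
    + apply Phin; auto.
    + reflexivity.
    + reflexivity.
    + apply Yt0.
    + apply Y0.
    + apply Ytder; auto.
    + apply Yder; auto.
Qed.
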